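(* Let $(t,\mu,\eta)$ be a pre-monad on a 0-cell $k$ in a 2-category $\mathcal K$. (1) The 2-cell $\mu\ast\eta t:t\Rightarrow t$ is idempotent. (2) Suppose there are a 1-cell $\widehat t:k\to k$ and 2-cells $\pi:t\Rightarrow\widehat t$ and $\iota:\widehat t\Rightarrow t$ with $\mu\ast\eta t=\iota\ast\pi$ and $\pi\ast\iota=\widehat t$ (the identity 2-cell). Then $(\widehat t,\ \widehat\mu:=\pi\ast\mu\ast\iota\iota,\ \widehat\eta:=\pi\ast\eta)$ is a monad in $\mathcal K$.
   Context: Conventions in a 2-category $\mathcal K$: horizontal composition and whiskering by juxtaposition in the order of functor composition; identity 1-cell of $k$ written $k$, identity 2-cell of $t$ written $t$; vertical composition $\ast$ with $\alpha\ast\beta$ meaning $\beta$ then $\alpha$; $\iota\iota$ denotes the horizontal composite of $\iota$ with itself. A pre-monad in $\mathcal K$ is a triple $(t,\mu,\eta)$ with $t:k\to k$ a 1-cell and $\mu:tt\Rightarrow t$, $\eta:k\Rightarrow t$ 2-cells satisfying $\mu\ast\mu t=\mu\ast t\mu$, $\mu\ast\eta t=\mu\ast t\eta$, $\mu\ast\eta\eta=\eta$ and $\mu\ast\mu t\ast\eta tt=\mu$. A monad is such a triple with $\mu$ associative and $\mu\ast\eta t=t=\mu\ast t\eta$. *)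

(* Defs.v *)
(* Since equalities of 1-cells are only
   propositional, 2-cells are transported along them with [cast2]. *)
Set Implicit Arguments.
Unset Strict Implicit.

Record TwoCatData := {
  obj : Type;
  hom : obj -> obj -> Type;
  cell : forall a b : obj, hom a b -> hom a b -> Type;
  idh : forall a : obj, hom a a;
  comp : forall a b c : obj, hom b c -> hom a b -> hom a c;  (* comp g f = g after f *)
  idc : forall (a b : obj) (f : hom a b), cell f f;
  vcomp : forall (a b : obj) (f g h : hom a b), cell g h -> cell f g -> cell f h;
     (* vcomp al be = "al * be" : first be, then al *)
  hcomp : forall (a b c : obj) (f f' : hom a b) (g g' : hom b c),
      cell g g' -> cell f f' -> cell (comp g f) (comp g' f')
     (* horizontal composite, juxtaposition in the order of functor composition *)
}.

Arguments hom {C} a b : rename.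
Arguments cell {C a b} f g : rename.
Arguments idh {C} a : rename.
Arguments comp {C a b c} g f : rename.
Arguments idc {C a b} f : rename.
Arguments vcomp {C a b f g h} al be : rename.
Arguments hcomp {C a b c f f' g g'} al be : rename.

Definition cast2 {C : TwoCatData} {a b : obj C} {f f' g g' : hom a b}
  (e1 : f = f') (e2 : g = g') (x : cell f g) : cell f' g' :=
  match e1 in _ = f1, e2 in _ = g1 return cell f1 g1 with
  | eq_refl, eq_refl => x
  end.

Record strict_2cat_axioms (C : TwoCatData) : Prop := {
  comp_assoc : forall (a b c d : obj C) (h : hom c d) (g : hom b c) (f : hom a b),
      comp h (comp g f) = comp (comp h g) f;
  comp_id_l : forall (a b : obj C) (f : hom a b), comp (idh b) f = f;
  comp_id_r : forall (a b : obj C) (f : hom a b), comp f (idh a) = f;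
  vcomp_assoc : forall (a b : obj C) (f g h i : hom a b)
      (al : cell h i) (be : cell g h) (ga : cell f g),
      vcomp al (vcomp be ga) = vcomp (vcomp al be) ga;
  vcomp_id_l : forall (a b : obj C) (f g : hom a b) (al : cell f g),
      vcomp (idc g) al = al;
  vcomp_id_r : forall (a b : obj C) (f g : hom a b) (al : cell f g),
      vcomp al (idc f) = al;
  interchange : forall (a b c : obj C) (f f' f'' : hom a b) (g g' g'' : hom b c)
      (al : cell g' g'') (be : cell g g') (ga : cell f' f'') (de : cell f f'),
      hcomp (vcomp al be) (vcomp ga de) = vcomp (hcomp al ga) (hcomp be de);
  hcomp_idc : forall (a b c : obj C) (f : hom a b) (g : hom b c),
      hcomp (idc g) (idc f) = idc (comp g f);
  hcomp_assoc : forall (a b c d : obj C) (f f' : hom a b) (g g' : hom b c)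
      (h h' : hom c d) (ga : cell h h') (be : cell g g') (al : cell f f'),
      cast2 (comp_assoc h g f) (comp_assoc h' g' f') (hcomp ga (hcomp be al))
      = hcomp (hcomp ga be) al;
  hcomp_id_l : forall (a b : obj C) (f f' : hom a b) (al : cell f f'),
      cast2 (comp_id_l f) (comp_id_l f') (hcomp (idc (idh b)) al) = al;
  hcomp_id_r : forall (a b : obj C) (f f' : hom a b) (al : cell f f'),
      cast2 (comp_id_r f) (comp_id_r f') (hcomp al (idc (idh a))) = al
}.

Record TwoCategory := {
  tc_data :> TwoCatData;
  tc_axioms : strict_2cat_axioms tc_data
}.

Section Monads.
Variables (K : TwoCategory) (k : obj K) (t : hom k k).
Let ax := tc_axioms K.

(* whiskerings: [lw s al] is "s al", [rw al s] is "al s" *)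
Definition lw {f g : hom k k} (s : hom k k) (al : cell f g) : cell (comp s f) (comp s g) :=
  hcomp (idc s) al.
Definition rw {f g : hom k k} (al : cell f g) (s : hom k k) : cell (comp f s) (comp g s) :=
  hcomp al (idc s).

(* mu * (eta t) : t => t, source k t identified with t by the unit law *)
Definition mu_eta_t (mu : cell (comp t t) t) (eta : cell (idh k) t) : cell t t :=
  cast2 (comp_id_l ax t) eq_refl (vcomp mu (rw eta t)).

Definition mu_t_eta (mu : cell (comp t t) t) (eta : cell (idh k) t) : cell t t :=
  cast2 (comp_id_r ax t) eq_refl (vcomp mu (lw t eta)).

(* mu * mu t = mu * t mu   (sources (tt)t and t(tt) identified by associativity) *)
Definition mu_assoc (mu : cell (comp t t) t) : Prop :=
  vcomp mu (rw mu t) = cast2 (comp_assoc ax t t t) eq_refl (vcomp mu (lw t mu)).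

Definition is_premonad (mu : cell (comp t t) t) (eta : cell (idh k) t) : Prop :=
  mu_assoc mu
  /\ mu_eta_t mu eta = mu_t_eta mu eta
  /\ cast2 (comp_id_l ax (idh k)) eq_refl (vcomp mu (hcomp eta eta)) = eta
  /\ vcomp mu (vcomp (rw mu t)
        (cast2 (comp_id_l ax (comp t t)) (comp_assoc ax t t t) (rw eta (comp t t))))
     = mu.

Definition is_monad (mu : cell (comp t t) t) (eta : cell (idh k) t) : Prop :=
  mu_assoc mu /\ mu_eta_t mu eta = idc t /\ mu_t_eta mu eta = idc t.

End Monads.

Arguments lw {K k f g} s al.
Arguments rw {K k f g} al s.
Arguments mu_eta_t {K k t} mu eta.
Arguments mu_t_eta {K k t} mu eta.
Arguments mu_assoc {K k t} mu.
Arguments is_premonad {K k t} mu eta.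
Arguments is_monad {K k t} mu eta.

(* Main.v *)
Require Import Defs.
From Stdlib Require Import ProofIrrelevance.

Section Casts.
Context {C : TwoCatData}.

Lemma cast_id {a b : obj C} {f g : hom a b} (e1 : f = f) (e2 : g = g) (x : cell f g) :
  cast2 e1 e2 x = x.
Proof. rewrite (proof_irrelevance _ e1 eq_refl), (proof_irrelevance _ e2 eq_refl). reflexivity. Qed.

Lemma cast_cast {a b : obj C} {f f1 f2 g g1 g2 : hom a b}
  (e3 : f = f1) (e4 : g = g1) (e1 : f1 = f2) (e2 : g1 = g2) (e5 : f = f2) (e6 : g = g2)
  (x : cell f g) : cast2 e1 e2 (cast2 e3 e4 x) = cast2 e5 e6 x.
Proof. destruct e3, e4, e1, e2. simpl. symmetry; apply cast_id. Qed.

Lemma cast_inv {a b : obj C} {f f' g g' : hom a b} (e1 : f = f') (e2 : g = g')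
  (x : cell f g) (y : cell f' g') : cast2 e1 e2 x = y -> x = cast2 (eq_sym e1) (eq_sym e2) y.
Proof. destruct e1, e2. simpl. auto. Qed.

Lemma cast_vcomp {a b : obj C} {f f' g g' h h' : hom a b}
  (e1 : f = f') (e2 : g = g') (e3 : h = h') (x : cell g h) (y : cell f g) :
  vcomp (cast2 e2 e3 x) (cast2 e1 e2 y) = cast2 e1 e3 (vcomp x y).
Proof. destruct e1, e2, e3. reflexivity. Qed.

Lemma cast_vcomp_r {a b : obj C} {f f' g h : hom a b}
  (e1 : f = f') (x : cell g h) (y : cell f g) :
  vcomp x (cast2 e1 eq_refl y) = cast2 e1 eq_refl (vcomp x y).
Proof. destruct e1. reflexivity. Qed.

Lemma cast_vcomp_mid {a b : obj C} {f g g' h : hom a b}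
  (e : g = g') (x : cell g h) (y : cell f g') :
  vcomp (cast2 e eq_refl x) y = vcomp x (cast2 eq_refl (eq_sym e) y).
Proof. destruct e. reflexivity. Qed.

Lemma cast_idc {a b : obj C} {f f' : hom a b} (e : f = f') :
  cast2 e e (idc f) = idc f'.
Proof. destruct e. reflexivity. Qed.
End Casts.

Section Main.
Variables (K : TwoCategory) (k : obj K) (t : hom k k)
  (mu : cell (comp t t) t) (eta : cell (idh k) t).
Local Notation A := (tc_axioms K).
Hypothesis HP : is_premonad mu eta.

Lemma E1 : vcomp (mu_eta_t mu eta) mu = mu.
Proof.
  destruct HP as [Hass [H2 [H3 H4]]].
  unfold mu_eta_t. rewrite cast_vcomp_mid.
  rewrite <- (vcomp_assoc A).
  assert (Hl := cast_inv _ _ _ _ (hcomp_id_l A mu)).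
  assert (Hc : cast2 eq_refl (eq_sym (comp_id_l A t)) mu
     = cast2 (comp_id_l A (comp t t)) eq_refl (hcomp (idc (idh k)) mu)).
  { rewrite Hl. symmetry. apply cast_cast. }
  rewrite Hc, !cast_vcomp_r.
  assert (Nat : vcomp (rw eta t) (hcomp (idc (idh k)) mu)
              = vcomp (lw t mu) (rw eta (comp t t))).
  { unfold rw, lw. rewrite <- !(interchange A).
    rewrite !(vcomp_id_l A), !(vcomp_id_r A). try reflexivity. }
  rewrite Nat. unfold mu_assoc in Hass.
  rewrite (vcomp_assoc A) in H4. rewrite Hass in H4.
  change (cast2 (comp_assoc A t t t) eq_refl (vcomp mu (lw t mu)))
    with (cast2 (comp_assoc A t t t) (@eq_refl _ t) (vcomp mu (lw t mu))) in H4.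
  rewrite cast_vcomp in H4.
  rewrite (vcomp_assoc A). exact H4.
Qed.

Lemma E2 : vcomp (mu_eta_t mu eta) eta = eta.
Proof.
  destruct HP as [Hass [H2 [H3 H4]]].
  unfold mu_eta_t. rewrite cast_vcomp_mid.
  rewrite <- (vcomp_assoc A).
  assert (Hl := cast_inv _ _ _ _ (hcomp_id_l A eta)).
  assert (Hc : cast2 eq_refl (eq_sym (comp_id_l A t)) eta
     = cast2 (comp_id_l A (idh k)) eq_refl (hcomp (idc (idh k)) eta)).
  { rewrite Hl. symmetry. apply cast_cast. }
  rewrite Hc, !cast_vcomp_r.
  assert (Nat : vcomp (rw eta t) (hcomp (idc (idh k)) eta) = hcomp eta eta).
  { unfold rw. rewrite <- !(interchange A).
    rewrite !(vcomp_id_l A), !(vcomp_id_r A). try reflexivity. }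
  rewrite Nat. exact H3.
Qed.

Lemma part1 : vcomp (mu_eta_t mu eta) (mu_eta_t mu eta) = mu_eta_t mu eta.
Proof.
  pose proof E1 as HE1.
  unfold mu_eta_t at 2 3. rewrite cast_vcomp_r. f_equal.
  rewrite (vcomp_assoc A), HE1. reflexivity.
Qed.

Section Split.
Variables (th : hom k k) (pi : cell t th) (iota : cell th t).
Hypothesis He : mu_eta_t mu eta = vcomp iota pi.
Hypothesis Hpi : vcomp pi iota = idc th.

Lemma unitL : mu_eta_t (vcomp pi (vcomp mu (hcomp iota iota))) (vcomp pi eta) = idc th.
Proof.
  assert (C1 : vcomp (hcomp iota iota) (rw (vcomp pi eta) th) = hcomp eta iota).
  { unfold rw. rewrite <- (interchange A), (vcomp_id_r A), (vcomp_assoc A), <- He, E2; try try reflexivity. }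
  assert (C2 : hcomp eta iota = vcomp (rw eta t)
     (cast2 (eq_sym (comp_id_l A th)) (eq_sym (comp_id_l A t)) iota)).
  { rewrite <- (cast_inv _ _ _ _ (hcomp_id_l A iota)). unfold rw.
    rewrite <- (interchange A), (vcomp_id_l A), (vcomp_id_r A). try reflexivity. }
  assert (C3 : vcomp (vcomp mu (rw eta t))
     (cast2 (eq_sym (comp_id_l A th)) (eq_sym (comp_id_l A t)) iota)
     = cast2 (eq_sym (comp_id_l A th)) eq_refl (vcomp (mu_eta_t mu eta) iota)).
  { unfold mu_eta_t. rewrite cast_vcomp_mid.
    rewrite <- (cast_vcomp_r (eq_sym (comp_id_l A th))). f_equal; try (symmetry; apply cast_cast). }
  unfold mu_eta_t at 1.
  rewrite <- !(vcomp_assoc A). rewrite C1, C2.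
  rewrite (vcomp_assoc A mu), C3, cast_vcomp_r.
  rewrite (cast_cast _ _ _ _ eq_refl eq_refl). simpl.
  rewrite He, <- (vcomp_assoc A iota pi iota), Hpi, (vcomp_id_r A). exact Hpi.
Qed.

Lemma unitR : mu_t_eta (vcomp pi (vcomp mu (hcomp iota iota))) (vcomp pi eta) = idc th.
Proof.
  destruct HP as [Hass [H2 [H3 H4]]].
  assert (C1 : vcomp (hcomp iota iota) (lw th (vcomp pi eta)) = hcomp iota eta).
  { unfold lw. rewrite <- (interchange A), (vcomp_id_r A), (vcomp_assoc A), <- He, E2; try try reflexivity. }
  assert (C2 : hcomp iota eta = vcomp (lw t eta)
     (cast2 (eq_sym (comp_id_r A th)) (eq_sym (comp_id_r A t)) iota)).
  { rewrite <- (cast_inv _ _ _ _ (hcomp_id_r A iota)). unfold lw.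
    rewrite <- (interchange A), (vcomp_id_l A), (vcomp_id_r A). try reflexivity. }
  assert (C3 : vcomp (vcomp mu (lw t eta))
     (cast2 (eq_sym (comp_id_r A th)) (eq_sym (comp_id_r A t)) iota)
     = cast2 (eq_sym (comp_id_r A th)) eq_refl (vcomp (mu_t_eta mu eta) iota)).
  { unfold mu_t_eta. rewrite cast_vcomp_mid.
    rewrite <- (cast_vcomp_r (eq_sym (comp_id_r A th))). f_equal; try (symmetry; apply cast_cast). }
  unfold mu_t_eta at 1.
  rewrite <- !(vcomp_assoc A). rewrite C1, C2.
  rewrite (vcomp_assoc A mu), C3, cast_vcomp_r.
  rewrite (cast_cast _ _ _ _ eq_refl eq_refl). simpl.
  rewrite <- H2, He, <- (vcomp_assoc A iota pi iota), Hpi, (vcomp_id_r A). exact Hpi.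
Qed.

Lemma assocH : mu_assoc (vcomp pi (vcomp mu (hcomp iota iota))).
Proof.
  destruct HP as [Hass [H2 [H3 H4]]].
  pose proof E1 as HE1.
  set (mh := vcomp pi (vcomp mu (hcomp iota iota))).
  assert (D1 : vcomp (hcomp iota iota) (rw mh th) = vcomp (rw mu t) (hcomp (hcomp iota iota) iota)).
  { unfold rw, mh. rewrite <- !(interchange A), (vcomp_id_r A), (vcomp_id_l A).
    rewrite !(vcomp_assoc A), <- He, HE1; try try reflexivity. }
  assert (D2 : vcomp (hcomp iota iota) (lw th mh) = vcomp (lw t mu) (hcomp iota (hcomp iota iota))).
  { unfold lw, mh. rewrite <- !(interchange A), (vcomp_id_r A), (vcomp_id_l A).
    rewrite !(vcomp_assoc A), <- He, HE1; try try reflexivity. }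
  unfold mu_assoc. unfold mh at 1 3.
  rewrite <- !(vcomp_assoc A). rewrite D1, D2.
  rewrite <- (hcomp_assoc A iota iota iota).
  rewrite (vcomp_assoc A mu), Hass.
  change (cast2 (comp_assoc A t t t) eq_refl (vcomp mu (lw t mu)))
    with (cast2 (comp_assoc A t t t) (@eq_refl _ t) (vcomp mu (lw t mu))).
  rewrite cast_vcomp, cast_vcomp_r, (vcomp_assoc A mu). reflexivity.
Qed.
End Split.
End Main.

Theorem lemma2p2 (K : TwoCategory) (k : obj K) (t : hom k k)
  (mu : cell (comp t t) t) (eta : cell (idh k) t) :
  is_premonad mu eta ->
  (* (1) mu * eta t is idempotent *)
  vcomp (mu_eta_t mu eta) (mu_eta_t mu eta) = mu_eta_t mu eta
  /\
  (* (2) splitting of the idempotent yields a monad *)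
  (forall (th : hom k k) (pi : cell t th) (iota : cell th t),
      mu_eta_t mu eta = vcomp iota pi ->
      vcomp pi iota = idc th ->
      is_monad (vcomp pi (vcomp mu (hcomp iota iota))) (vcomp pi eta)).
Proof.
  intro HP. split.
  - eapply part1; eauto.
  - intros th pi iota He Hpi. split; [|split].
    + eapply assocH; eauto.
    + eapply unitL; eauto.
    + eapply unitR; eauto.
Qed.
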